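(* The free energy $\mathcal{F}$ is lower semicontinuous in the weak $L^1$ topology: if $n=(n_A,n_B,n_C)$ and $n_k=(n_{k,A},n_{k,B},n_{k,C})$, $k=1,2,\dots$, are profiles such that for each $\alpha\in\{A,B,C\}$ the sequence $n_{k,\alpha}$ converges weakly in $L^1([0,1])$ to $n_\alpha$, then $\liminf_{k\to\infty}\mathcal{F}(\{n_k\})\ge\mathcal{F}(\{n\})$.
   Context: A profile is a triple $(n_A,n_B,n_C)$ of measurable functions on $[0,1]$ with values in $[0,1]$. A sequence $f_k\in L^1([0,1])$ converges weakly to $f$ if $\int_0^1f_k\phi\,dx\to\int_0^1f\phi\,dx$ for every bounded measurable $\phi$. For $\beta>0$ fixed, $\mathcal{F}(\{n\})=\beta\int_0^1dx\int_x^1dz\,[n_A(x)n_C(z)+n_B(x)n_A(z)+n_C(x)n_B(z)]+\int_0^1\sum_{\alpha}n_\alpha(x)\ln n_\alpha(x)\,dx$ with $0\ln0=0$. *)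

(* Defs.v *)
From HB Require Import structures.
From mathcomp Require Import all_boot all_order all_algebra.
From mathcomp Require Import all_classical all_reals all_analysis.
Set Implicit Arguments. Unset Strict Implicit. Unset Printing Implicit Defensive.
Import Order.TTheory GRing.Theory Num.Theory.
Import numFieldNormedType.Exports.
Local Open Scope classical_set_scope.
Local Open Scope ring_scope.

Definition xlnx {R : realType} (x : R) : R := if x == 0 then 0 else x * ln x.

Definition profile_comp {R : realType} (f : R -> R) : Prop :=
  measurable_fun (`[0%R, 1%R] : set R) f /\ (forall x, `[0%R, 1%R]%classic x -> 0 <= f x <= 1).

Definition weakL1_cvg {R : realType} (fk : nat -> R -> R) (f : R -> R) : Prop :=
  forall phi : R -> R, measurable_fun (`[0%R, 1%R] : set R) phi ->
    (exists M : R, forall x, `[0%R, 1%R]%classic x -> `|phi x| <= M) ->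
    (fun k => Rintegral (@lebesgue_measure R) `[0%R, 1%R]%classic (fun x => fk k x * phi x))
      @ \oo --> Rintegral (@lebesgue_measure R) `[0%R, 1%R]%classic (fun x => f x * phi x).

Definition free_energy {R : realType} (beta : R) (nA nB nC : R -> R) : R :=
  beta * Rintegral (@lebesgue_measure R) `[0%R, 1%R]
           (fun x => Rintegral (@lebesgue_measure R) `[x, 1%R]%classic
              (fun z => nA x * nC z + nB x * nA z + nC x * nB z))
  + Rintegral (@lebesgue_measure R) `[0%R, 1%R]
           (fun x => xlnx (nA x) + xlnx (nB x) + xlnx (nC x)).

(* Main.v *)
Require Import Defs.
From HB Require Import structures.
From mathcomp Require Import all_boot all_order all_algebra.
From mathcomp Require Import all_classical all_reals all_analysis.
From mathcomp Require Import ring lra.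
Import Order.TTheory GRing.Theory Num.Theory.
Import numFieldNormedType.Exports.
Local Open Scope classical_set_scope.
Local Open Scope ring_scope.



Section Aux.
Context {R : realType}.
Local Notation mu := (@lebesgue_measure R).
Local Notation I := (`[0%R, 1%R]%classic : set R).

Lemma mI : measurable I. Proof. by []. Qed.

Lemma muI : mu I = 1%:E.
Proof. have -> := @lebesgue_measure_itv R `[0%R, 1%R]. by rewrite /= lte_fin ltr01 sube0. Qed.

Lemma int_bd (D : set R) (f : R -> R) (M : R) : measurable D -> D `<=` I ->
  measurable_fun I f -> (forall x, I x -> `|f x| <= M) ->
  mu.-integrable D (EFin \o f).
Proof.
move=> mD DI mf fM; apply: (@integrableS _ _ _ mu _ _ _ mI mD DI).
apply: measurable_bounded_integrable => //.
  by change (mu I < +oo)%E; rewrite muI ltry.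
exists M; split; first by rewrite num_real.
move=> y My x Dx /=; exact: le_trans (fM _ Dx) (ltW My).
Qed.

Lemma liminf_ge (v : nat -> \bar R) (c : \bar R) :
  (\forall k \near \oo, (c <= v k)%E) -> (c <= limn_einf v)%E.
Proof.
move=> [N _ HN]; rewrite limn_einf_lim; apply: lime_ge; first exact: is_cvg_einfs.
exists N => // n /= Nn; apply: le_ereal_inf_tmp => _ [k /= nk <-].
apply: HN => /=; exact: leq_trans nk.
Qed.

End Aux.



Section Pointwise.
Context {R : realType}.

Lemma xlnxE (y : R) : xlnx y = y * ln y.
Proof. by rewrite /xlnx; case: eqP => [->|//]; rewrite mul0r. Qed.

Lemma ln_ub (t : R) : 0 < t -> ln t <= t - 1.
Proof.
move=> t0; have := @le_ln1Dx R (t - 1); rewrite addrCA subrr addr0; apply.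
lra.
Qed.

Lemma tangent (y a : R) : 0 <= y -> 0 < a ->
  a * ln a + (ln a + 1) * (y - a) <= xlnx y.
Proof.
move=> y0 a0; rewrite xlnxE.
have E : a * ln a + (ln a + 1) * (y - a) = y * ln a + y - a by ring.
rewrite E; have [->|yp] := eqVneq y 0.
  rewrite !mul0r; lra.
have yp' : 0 < y by rewrite lt_neqAle eq_sym yp y0.
have h := ln_ub (a / y) (divr_gt0 a0 yp').
rewrite ln_div ?posrE// in h.
have h2 : y * (ln a - ln y) <= y * (a / y - 1) by rewrite ler_pM2l.
rewrite mulrBr mulrBr mulr1 mulrCA divff ?mulr1 ?gt_eqF // in h2; lra.
Qed.

Lemma trunc_err (y eta : R) : 0 <= y -> 0 < eta ->
  xlnx y - eta <= let a := Num.max y eta in a * ln a + (ln a + 1) * (y - a).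
Proof.
move=> y0 e0 /=; rewrite xlnxE.
have [ye|ey] := leP eta y.
  rewrite subrr mulr0 addr0; lra.

have E : eta * ln eta + (ln eta + 1) * (y - eta) = y * ln eta + y - eta by ring.
rewrite E; have [->|yp] := eqVneq y 0.
  rewrite !mul0r; lra.
have yp' : 0 < y by rewrite lt_neqAle eq_sym yp y0.
have : ln y <= ln eta by rewrite ler_ln ?posrE// ltW.
move=> h; have : y * ln y <= y * ln eta by rewrite ler_pM2l.
lra.
Qed.

Lemma xlnx_bd (y : R) : 0 <= y <= 1 -> `|xlnx y| <= 1.
Proof.
move=> /andP[y0 y1]; rewrite xlnxE.
have [->|yp] := eqVneq y 0; first by rewrite mul0r normr0.
have yp' : 0 < y by rewrite lt_neqAle eq_sym yp y0.
have l0 : ln y <= 0 by apply: ln_le0.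
rewrite ler_norml; apply/andP; split; last first.
  nra.
have h := ln_ub (y^-1) (ltac:(by rewrite invr_gt0)).
rewrite lnV ?posrE// in h.
have : y * (- ln y) <= y * (y^-1 - 1) by rewrite ler_pM2l.
rewrite mulrBr mulr1 divff ?gt_eqF //.
nra.
Qed.

End Pointwise.



Section Good.
Context {R : realType}.
Local Notation mu := (@lebesgue_measure R).
Local Notation I := (`[0%R, 1%R]%classic : set R).

Definition good (f : R -> R) := measurable_fun I f /\
  exists M : R, forall x, I x -> `|f x| <= M.

Lemma good_cst (c : R) : good (fun=> c).
Proof. by split => //; exists `|c|. Qed.

Lemma good_add f g : good f -> good g -> good (fun x => f x + g x).
Proof.
move=> [mf [M fM]] [mg [N gN]]; split; first exact: measurable_realfun.measurable_funD.
exists (M + N) => x Ix; rewrite (le_trans (ler_normD _ _))// lerD//; auto.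
Qed.

Lemma good_mul f g : good f -> good g -> good (fun x => f x * g x).
Proof.
move=> [mf [M fM]] [mg [N gN]]; split; first exact: measurable_realfun.measurable_funM.
exists (M * N) => x Ix; rewrite normrM ler_pM//; auto.
Qed.

Lemma good_opp f : good f -> good (fun x => - f x).
Proof.
move=> [mf [M fM]]; split; first exact: measurableT_comp.
by exists M => x Ix; rewrite normrN; auto.
Qed.

Lemma good_prof f : profile_comp f -> good f.
Proof.
move=> [mf fb]; split => //; exists 1 => x Ix.
by have /andP[f0 f1] := fb x Ix; rewrite ger0_norm.
Qed.

Lemma good_int f D : good f -> measurable D -> D `<=` I ->
  mu.-integrable D (EFin \o f).
Proof. by move=> [mf [M fM]] mD DI; exact: (int_bd _ _ _ mD DI mf fM). Qed.

Lemma good_ext f g : {in I, f =1 g} -> good f -> good g.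
Proof.
move=> fg [mf [M fM]]; split; first exact: eq_measurable_fun mf.
by exists M => x Ix; rewrite -fg ?inE//; auto.
Qed.

End Good.



Section GG.
Context {R : realType}.
Local Notation mu := (@lebesgue_measure R).
Local Notation I := (`[0%R, 1%R]%classic : set R).

Definition G (g : R -> R) (x : R) := Rintegral mu (I `&` `[x, 1%R]) g.

Lemma sub_le (g : R -> R) (A B : set R) : profile_comp g ->
  measurable A -> measurable B -> A `<=` B -> B `<=` I ->
  Rintegral mu A g <= Rintegral mu B g.
Proof.
move=> pg mA mB AB BI; rewrite /Rintegral; apply: fine_le.
- apply: integrable_fin_num => //; apply: good_int => //; first exact: good_prof.
  exact: subset_trans BI.
- by apply: integrable_fin_num => //; apply: good_int => //; exact: good_prof.
- apply: ge0_subset_integral => //.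
    apply/measurable_realfun.measurable_EFinP; apply: measurable_funS pg.1 => //.
  by move=> x Bx; rewrite lee_fin; have /andP[] := pg.2 x (BI _ Bx).
Qed.

Lemma mIx (x : R) : measurable (I `&` `[x, 1%R]).
Proof. exact: measurableI. Qed.

Lemma G_ni g : profile_comp g -> {homo G g : x y / x <= y >-> y <= x}.
Proof.
move=> pg x y xy; apply: sub_le => //; try exact: mIx.
move=> z [Iz]; rewrite /= in_itv/= => /andP[yz z1]; split => //.
by rewrite /= in_itv/= z1 (le_trans xy yz).
Qed.

Lemma RI_cst (c : R) : Rintegral mu I (fun=> c) = c.
Proof.
rewrite Rintegral_cst //.
by rewrite (_ : fine _ = 1) ?mulr1 //; change (fine (mu I) = 1); rewrite muI.
Qed.

Lemma G_bd g x : profile_comp g -> `|G g x| <= 1.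
Proof.
move=> pg; rewrite ger0_norm; last first.
  by apply: Rintegral_ge0 => z [Iz _]; have /andP[] := pg.2 z Iz.
apply: (le_trans (y := Rintegral mu I g)).
  by apply: sub_le => //; try exact: mIx; exact: subIsetl.
rewrite -[X in _ <= X](RI_cst 1); apply: le_Rintegral => //.
- by apply: good_int => //; exact: good_prof.
- by apply: good_int => //; exact: good_cst.
- by move=> z Iz; have /andP[] := pg.2 z Iz.
Qed.

Lemma G_good g : profile_comp g -> good (G g).
Proof.
move=> pg; split; last by exists 1 => x _; exact: G_bd.
by apply: measurable_realfun.nonincreasing_measurable => //; exact: G_ni.
Qed.

Lemma G_key (h : R -> R) x :
  Rintegral mu I (fun z => h z * \1_(`[x, 1%R]%classic : set R) z) = G h x.
Proof.
rewrite /G Rintegral_mkcondr; apply: eq_Rintegral => z _.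
by rewrite /patch indicE; case: (z \in _); rewrite ?mulr1 ?mulr0.
Qed.

Lemma G_cvg gk g : weakL1_cvg gk g ->
  forall x, (fun k => G (gk k) x) @ \oo --> G g x.
Proof.
move=> cg x.
have := cg (\1_(`[x, 1%R]%classic : set R)) (measurable_realfun.measurable_indic (measurable_itv _)) .
have E : (fun k => Rintegral mu I (fun z => gk k z * \1_(`[x, 1%R]%classic : set R) z))
  = fun k => G (gk k) x by apply: funext => k; exact: G_key.
rewrite E G_key; apply => //.
by exists 1 => z _; rewrite indicE; case: (z \in _); rewrite ?normr1 ?normr0.
Qed.

Lemma Q_cvg fk f gk g : (forall k, profile_comp (fk k)) -> profile_comp f ->
  (forall k, profile_comp (gk k)) -> profile_comp g ->
  weakL1_cvg fk f -> weakL1_cvg gk g ->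
  (fun k => Rintegral mu I (fun x => fk k x * G (gk k) x)) @ \oo -->
    Rintegral mu I (fun x => f x * G g x).
Proof.
move=> pfk pf pgk pg cf cg.
pose c := fun k => Rintegral mu I (fun x => `|G (gk k) x - G g x|).
have gd k : good (fun x => `|G (gk k) x - G g x|).
  have [m1 _] := G_good _ (pgk k); have [m2 _] := G_good _ pg.
  split.
    have h1 := @measurable_realfun.normr_measurable R setT.
    have h2 := measurable_realfun.measurable_funB m1 m2.
    exact: (measurableT_comp h1 h2).
  by exists 2 => x _; rewrite normr_id (le_trans (ler_normB _ _))// -[2]/(1 + 1) lerD// ?(G_bd _ _ (pgk k)) ?(G_bd _ _ pg).
have c0 : c @ \oo --> 0.
  have := @dominated_cvg _ _ _ mu I mI
    (fun k x => (`|G (gk k) x - G g x|)%:E) (cst 0%:E) (cst 2%:E).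
  rewrite integral0 => H.
  apply: (fine_cvg (H _ _ _ _ _)).
  - by move=> k; apply/measurable_realfun.measurable_EFinP; exact: (gd k).1.
  - move=> x _; apply: cvg_EFin; first exact: nearW.
    apply/(norm_cvg0P (fun k => G (gk k) x - G g x)).
    by apply/subr_cvg0; exact: G_cvg.
  - by [].
  - exact: (good_int _ _ (good_cst 2) mI (@subset_refl _ _)).
  - move=> k x Ix /=; rewrite lee_fin normr_id.
    by rewrite (le_trans (ler_normB _ _))// -[2]/(1 + 1) lerD// ?(G_bd _ _ (pgk k)) ?(G_bd _ _ pg).
have b : (fun k => Rintegral mu I (fun x => fk k x * G g x)) @ \oo -->
    Rintegral mu I (fun x => f x * G g x).
  by apply: cf; [exact: (G_good _ pg).1 | exact: (G_good _ pg).2].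
have a : (fun k => Rintegral mu I (fun x => fk k x * G (gk k) x) -
    Rintegral mu I (fun x => fk k x * G g x)) @ \oo --> 0.
  apply: (squeeze_cvgr (f := fun k => - c k) (h := c)); last exact: c0.
    apply: nearW => k; rewrite -ler_norml.
    have gf := good_prof _ (pfk k).
    have g1 := G_good _ (pgk k); have g2 := G_good _ pg.
    rewrite -RintegralB //; last 2 first.
      exact: (good_int _ _ (good_mul _ _ gf g1) mI (@subset_refl _ _)).
      exact: (good_int _ _ (good_mul _ _ gf g2) mI (@subset_refl _ _)).
    under eq_Rintegral => x _ do rewrite -mulrBr.
    apply: (le_trans (le_normr_Rintegral _ _)) => //.
      exact: (good_int _ _ (good_mul _ _ gf (good_add _ _ g1 (good_opp _ g2))) mI (@subset_refl _ _)).
    apply: le_Rintegral => //.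
    - apply: integrable_norm.
      exact: (good_int _ _ (good_mul _ _ gf (good_add _ _ g1 (good_opp _ g2))) mI (@subset_refl _ _)).
    - exact: (good_int _ _ (gd k) mI (@subset_refl _ _)).
    - move=> x Ix; rewrite normrM ler_piMl //.
      by have /andP[h0 h1] := (pfk k).2 x Ix; rewrite ger0_norm.
  by rewrite -oppr0; exact: cvgN c0.
rewrite (_ : (fun k => _) = (fun k => (Rintegral mu I (fun x => fk k x * G (gk k) x) -
    Rintegral mu I (fun x => fk k x * G g x)) + Rintegral mu I (fun x => fk k x * G g x))); last first.
  by apply: funext => k; rewrite subrK.
by rewrite -[X in _ --> X]add0r; exact: cvgD.
Qed.

End GG.



Section Ent.
Context {R : realType}.
Local Notation mu := (@lebesgue_measure R).
Local Notation I := (`[0%R, 1%R]%classic : set R).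

Definition Ent (f : R -> R) : R := Rintegral mu I (fun x : R => @xlnx R (f x)).

Lemma good_xlnx (f : R -> R) : profile_comp f -> good (fun x => xlnx (f x)).
Proof.
move=> pf; apply: (good_ext (fun x => f x * ln (f x))).
  by move=> x _; rewrite xlnxE.
split; last first.
  exists 1 => x Ix; rewrite -xlnxE; apply: xlnx_bd; exact: pf.2.
apply: measurable_realfun.measurable_funM; first exact: pf.1.
exact: (measurableT_comp (@measurable_realfun.measurable_ln R) pf.1).
Qed.

Lemma ent_lb (fk : nat -> R -> R) (f : R -> R) (eta : R) : (forall k, profile_comp (fk k)) -> profile_comp f ->
  weakL1_cvg fk f -> 0 < eta <= 1 ->
  exists T : nat -> R, exists t : R,
    [/\ forall k, T k <= Ent (fk k), T @ \oo --> t & Ent f - eta <= t].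
Proof.
move=> pfk pf cf /andP[e0 e1].
pose a x := Num.max (f x) eta.
have aI x : I x -> eta <= a x <= 1.
  move=> Ix; have /andP[f0 f1] := pf.2 x Ix.
  by rewrite /a le_max lexx orbT /= ge_max f1 e1.
have ga : good a.
  split; first exact: (measurable_realfun.measurable_maxr pf.1 (measurable_cst _)).
  exists 1 => x Ix; have /andP[h1 h2] := aI x Ix.
  by rewrite ger0_norm // (le_trans (ltW e0)).
have gl : good (fun x => ln (a x)).
  split; first exact: (measurableT_comp (@measurable_realfun.measurable_ln R) ga.1).
  exists (- ln eta) => x Ix; have /andP[h1 h2] := aI x Ix.
  have l0 : ln (a x) <= 0 by apply: ln_le0.
  have l1 : ln eta <= ln (a x) by rewrite ler_ln ?posrE // (lt_le_trans e0).
  rewrite ler0_norm //; lra.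
pose phi x := ln (a x) + 1.
pose c x := a x * ln (a x) - phi x * a x.
have gphi : good phi by exact: good_add _ _ gl (good_cst 1).
have gc : good c.
  exact: good_add _ _ (good_mul _ _ ga gl) (good_opp _ (good_mul _ _ gphi ga)).
exists (fun k => Rintegral mu I (fun x => c x + phi x * fk k x)).
exists (Rintegral mu I (fun x => c x + phi x * f x)).
split.
- move=> k; apply: le_Rintegral => //.
  + exact: (good_int _ _ (good_add _ _ gc (good_mul _ _ gphi (good_prof _ (pfk k)))) mI (@subset_refl _ _)).
  + exact: (good_int _ _ (good_xlnx _ (pfk k)) mI (@subset_refl _ _)).
  + move=> x Ix; have /andP[h1 h2] := aI x Ix.
    have /andP[y0 _] := (pfk k).2 x Ix.
    have := tangent (fk k x) (a x) y0 (lt_le_trans e0 h1).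
    suff -> : c x + phi x * fk k x = a x * ln (a x) + (ln (a x) + 1) * (fk k x - a x) by [].
    by rewrite /c /phi; ring.
- have E (h : R -> R) : profile_comp h ->
    Rintegral mu I (fun x => c x + phi x * h x) =
    Rintegral mu I c + Rintegral mu I (fun x => h x * phi x).
    move=> ph; rewrite RintegralD //.
    + by congr (_ + _); apply: eq_Rintegral => x _; rewrite mulrC.
    + exact: (good_int _ _ gc mI (@subset_refl _ _)).
    + exact: (good_int _ _ (good_mul _ _ gphi (good_prof _ ph)) mI (@subset_refl _ _)).
  rewrite (funext (fun k => E _ (pfk k))) E //.
  apply: cvgD; first exact: cvg_cst.
  by apply: cf; [exact: gphi.1 | exact: gphi.2].
- rewrite -[X in _ - X]RI_cst /Ent -RintegralB //; last 2 first.
    exact: (good_int _ _ (good_xlnx _ pf) mI (@subset_refl _ _)).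
    exact: (good_int _ _ (good_cst eta) mI (@subset_refl _ _)).
  apply: le_Rintegral => //.
  + exact: (good_int _ _ (good_add _ _ (good_xlnx _ pf) (good_opp _ (good_cst eta))) mI (@subset_refl _ _)).
  + exact: (good_int _ _ (good_add _ _ gc (good_mul _ _ gphi (good_prof _ pf))) mI (@subset_refl _ _)).
  + move=> x Ix; have /andP[y0 _] := pf.2 x Ix.
    have := trunc_err (f x) eta y0 e0; rewrite /= => /le_trans; apply.
    suff -> : c x + phi x * f x = a x * ln (a x) + (ln (a x) + 1) * (f x - a x) by [].
    by rewrite /c /phi; ring.
Qed.

End Ent.



Section FE.
Context {R : realType}.
Local Notation mu := (@lebesgue_measure R).
Local Notation I := (`[0%R, 1%R]%classic : set R).

Lemma inner_eq (nA nB nC : R -> R) x : profile_comp nA -> profile_comp nB ->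
  profile_comp nC -> I x ->
  Rintegral mu `[x, 1%R]%classic (fun z => nA x * nC z + nB x * nA z + nC x * nB z)
  = nA x * G nC x + nB x * G nA x + nC x * G nB x.
Proof.
move=> pA pB pC Ix.
have -> : (`[x, 1%R]%classic : set R) = I `&` `[x, 1%R].
  apply/seteqP; split => z; last by case.
  move=> xz; split => //; move: xz Ix; rewrite /= !in_itv/= => /andP[xz ->] /andP[x0 _].
  by rewrite (le_trans x0 xz).
have gA := good_prof _ pA; have gB := good_prof _ pB; have gC := good_prof _ pC.
rewrite RintegralD //; [ |exact: mIx
  | exact: (good_int _ _ (good_add _ _ (good_mul _ _ (good_cst (nA x)) gC) (good_mul _ _ (good_cst (nB x)) gA)) (mIx x) (@subIsetl _ _ _))
  | exact: (good_int _ _ (good_mul _ _ (good_cst (nC x)) gB) (mIx x) (@subIsetl _ _ _))].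
rewrite RintegralD //; [ |exact: mIx
  | exact: (good_int _ _ (good_mul _ _ (good_cst (nA x)) gC) (mIx x) (@subIsetl _ _ _))
  | exact: (good_int _ _ (good_mul _ _ (good_cst (nB x)) gA) (mIx x) (@subIsetl _ _ _))].
rewrite !RintegralZl //; try exact: mIx.
- exact: (good_int _ _ gB (mIx x) (@subIsetl _ _ _)).
- exact: (good_int _ _ gA (mIx x) (@subIsetl _ _ _)).
- exact: (good_int _ _ gC (mIx x) (@subIsetl _ _ _)).
Qed.

Definition Q (f g : R -> R) := Rintegral mu I (fun x => f x * G g x).

Lemma FE_eq (beta : R) (nA nB nC : R -> R) : profile_comp nA -> profile_comp nB ->
  profile_comp nC -> free_energy beta nA nB nC =
  beta * (Q nA nC + Q nB nA + Q nC nB) + (Ent nA + Ent nB + Ent nC).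
Proof.
move=> pA pB pC; rewrite /free_energy.
have gA := good_prof _ pA; have gB := good_prof _ pB; have gC := good_prof _ pC.
have GA := G_good _ pA; have GB := G_good _ pB; have GC := G_good _ pC.
congr (_ * _ + _).
  under eq_Rintegral => x Ix do rewrite (inner_eq _ _ _ x pA pB pC (set_mem Ix)).
  rewrite RintegralD //; [ | exact: (good_int _ _ (good_add _ _ (good_mul _ _ gA GC) (good_mul _ _ gB GA)) mI (@subset_refl _ _))
    | exact: (good_int _ _ (good_mul _ _ gC GB) mI (@subset_refl _ _))].
  rewrite RintegralD //;
    [ exact: (good_int _ _ (good_mul _ _ gA GC) mI (@subset_refl _ _))
    | exact: (good_int _ _ (good_mul _ _ gB GA) mI (@subset_refl _ _))].
rewrite RintegralD //; [ | exact: (good_int _ _ (good_add _ _ (good_xlnx _ pA) (good_xlnx _ pB)) mI (@subset_refl _ _))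
  | exact: (good_int _ _ (good_xlnx _ pC) mI (@subset_refl _ _))].
rewrite RintegralD //;
  [ exact: (good_int _ _ (good_xlnx _ pA) mI (@subset_refl _ _))
  | exact: (good_int _ _ (good_xlnx _ pB) mI (@subset_refl _ _))].
Qed.

End FE.



Lemma fin_arith {R : realType} (a b Lk Ll tA tB tC EA EB EC eta e : R) :
  Ll = a + (tA + tB + tC) -> EA - eta <= tA -> EB - eta <= tB -> EC - eta <= tC ->
  Ll - Lk < eta -> Lk <= b -> 4 * eta <= e -> a + (EA + EB + EC) - e <= b.
Proof. move=> ->; lra. Qed.

Theorem lemma10p1 (R : realType) (beta : R) (hbeta : 0 < beta)
  (nA nB nC : R -> R) (nkA nkB nkC : nat -> R -> R)
  (hA : profile_comp nA) (hB : profile_comp nB) (hC : profile_comp nC)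
  (hkA : forall k, profile_comp (nkA k)) (hkB : forall k, profile_comp (nkB k))
  (hkC : forall k, profile_comp (nkC k))
  (cA : weakL1_cvg nkA nA) (cB : weakL1_cvg nkB nB) (cC : weakL1_cvg nkC nC) :
  ((free_energy beta nA nB nC)%:E <=
     limn_einf (fun k => (free_energy beta (nkA k) (nkB k) (nkC k))%:E))%E.
Proof.
apply/lee_subgt0Pr => e e0.
pose eta := Num.min (e / 4) 1.
have eta0 : 0 < eta by rewrite lt_min ltr01 andbT divr_gt0.
have eta1 : eta <= 1 by rewrite ge_min lexx orbT.
have eta4 : 4 * eta <= e.
  have : eta <= e / 4 by rewrite ge_min lexx.
  lra.
have etaI : 0 < eta <= 1 by rewrite eta0 eta1.
have [TA [tA [TAle TAc tAge]]] := ent_lb _ _ eta hkA hA cA etaI.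
have [TB [tB [TBle TBc tBge]]] := ent_lb _ _ eta hkB hB cB etaI.
have [TC [tC [TCle TCc tCge]]] := ent_lb _ _ eta hkC hC cC etaI.
have Qc : (fun k => Q (nkA k) (nkC k) + Q (nkB k) (nkA k) + Q (nkC k) (nkB k))
    @ \oo --> Q nA nC + Q nB nA + Q nC nB.
  by apply: cvgD; [apply: cvgD|]; apply: Q_cvg.
pose L := fun k => beta * (Q (nkA k) (nkC k) + Q (nkB k) (nkA k) + Q (nkC k) (nkB k))
  + (TA k + TB k + TC k).
have Lc : L @ \oo --> beta * (Q nA nC + Q nB nA + Q nC nB) + (tA + tB + tC).
  apply: cvgD; first by apply: cvgM => //; exact: cvg_cst.
  by apply: cvgD; [apply: cvgD|].
apply: liminf_ge.
have Hn := cvgr_dist_lt _ _ Lc _ eta0.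
near=> k.
have Hk : `|(beta * (Q nA nC + Q nB nA + Q nC nB) + (tA + tB + tC)) - L k| < eta.
  by near: k; exact: Hn.
rewrite lee_fin (FE_eq _ _ _ _ hA hB hC) (FE_eq _ _ _ _ (hkA k) (hkB k) (hkC k)).
move: Hk; rewrite ltr_norml => /andP[_ Hk2].
apply: (@fin_arith R _ _ (L k) (beta * (Q nA nC + Q nB nA + Q nC nB) + (tA + tB + tC))
  tA tB tC _ _ _ eta) => //.
rewrite /L lerD2l; apply: lerD; [apply: lerD|]; by [].
Unshelve. all: by end_near.
Qed.
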